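(* For every integer $L\ge 0$ and every integer $n\ge 0$, $$b_L(n+1)=\frac{1}{n+1}\sum_{k=0}^{n}\binom{n+1}{k}^{L+1}(n+1-k)\,b_L(k)=\sum_{k=0}^{n}\binom{n}{k}\binom{n+1}{k}^{L}b_L(k),\qquad b_L(0)=1.$$ Consequently every $b_L(n)$ is a positive integer.
   Context: For an integer $L\ge 0$ let ${}_0F_L(z)=\sum_{n=0}^{\infty}\frac{z^n}{(n!)^{L+1}}$ (the hypergeometric series ${}_0F_L(1,\ldots,1;z)$ with $L$ parameters equal to $1$; e.g. ${}_0F_0(z)=e^z$). Define the real numbers $b_L(n)$, $n\ge 0$, by the formal power series identity $\exp\big({}_0F_L(z)-1\big)=\sum_{n=0}^{\infty}b_L(n)\frac{z^n}{(n!)^{L+1}}$. *)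

(* Defs.v *)
(* Formal power series are handled coefficientwise over rat. *)
From HB Require Import structures.
From mathcomp Require Import all_boot all_order all_algebra.
Set Implicit Arguments. Unset Strict Implicit. Unset Printing Implicit Defensive.
Import Order.TTheory GRing.Theory Num.Theory.
Local Open Scope ring_scope.

(* Truncation to degree <= N of  0F_L(z) - 1 = sum_{i>=1} z^i / (i!)^(L+1). *)
Definition G_trunc (L N : nat) : {poly rat} :=
  \poly_(i < N.+1) (if i == 0%N then 0 else ((i`!)%:R ^+ L.+1)^-1).

(* Coefficient of z^N in exp(0F_L(z) - 1) = sum_m (0F_L(z)-1)^m / m!.
   Since 0F_L - 1 has zero constant term, only m <= N contribute to z^N,
   and only the terms of degree <= N of 0F_L - 1 matter. *)
Definition expF_coef (L N : nat) : rat :=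
  \sum_(m < N.+1) ((G_trunc L N) ^+ m)`_N / (m`!)%:R.

(* b_L(N) defined by exp(0F_L(z)-1) = sum_N b_L(N) z^N / (N!)^(L+1). *)
Definition bL (L N : nat) : rat := (N`!)%:R ^+ L.+1 * expF_coef L N.

(* Main.v *)
Require Import Defs.
From HB Require Import structures.
From mathcomp Require Import all_boot all_order all_algebra.
From mathcomp Require Import zify ring lra.
Import Order.TTheory GRing.Theory Num.Theory.
Local Open Scope ring_scope.

Lemma coefX_agree (R : comNzRingType) (p q : {poly R}) (N : nat) :
  (forall i, (i <= N)%N -> p`_i = q`_i) ->
  forall m j, (j <= N)%N -> (p ^+ m)`_j = (q ^+ m)`_j.
Proof.
move=> H; elim=> [|m IH] j hj; first by rewrite !expr0.
rewrite !exprS !coefM; apply: eq_bigr => i _.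
have hi := ltn_ord i.
rewrite H ?IH //; lia.
Qed.

Lemma coefX_van (R : comNzRingType) (p : {poly R}) :
  p`_0 = 0 -> forall m j, (j < m)%N -> (p ^+ m)`_j = 0.
Proof.
move=> H; elim=> [|m IH] j hj //.
rewrite exprS coefM; apply: big1 => -[i hi] _ /=.
case: i hi => [|i] hi; first by rewrite H mul0r.
rewrite IH ?mulr0 //; lia.
Qed.

Lemma G0 L M : (G_trunc L M)`_0 = 0.
Proof. by rewrite coef_poly. Qed.

Lemma expF_any L M K j : (j <= M)%N -> (j < K)%N ->
  expF_coef L j = \sum_(m < K) ((G_trunc L M) ^+ m)`_j / (m`!)%:R.
Proof.
move=> hM hK; rewrite /expF_coef.
rewrite (big_ord_widen K (fun m => ((G_trunc L j) ^+ m)`_j / (m`!)%:R)) //.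
rewrite big_mkcond; apply: eq_bigr => m _.
case: ifP => [_|/negbT]; last first.
  by rewrite -leqNgt => hm; rewrite coefX_van ?mul0r // G0.
congr (_ / _); apply: coefX_agree (leqnn j) => i hi.
rewrite !coef_poly.
have -> : (i < M.+1)%N by lia.
have -> : (i < j.+1)%N by lia.
by [].
Qed.

Lemma rec L N : expF_coef L N.+1 *+ N.+1 =
  \sum_(k < N.+1) expF_coef L k * ((((N - k).+1`!)%:R ^+ L.+1)^-1 *+ (N - k).+1).
Proof.
set P := G_trunc L N.+1.
pose E := \sum_(m < N.+3) ((m`!)%:R^-1) *: P ^+ m.
pose F := \sum_(m < N.+2) ((m`!)%:R^-1) *: P ^+ m.
have hE : E^`() = F * P^`().
  rewrite /E raddf_sum big_ord_recl /= expr0 derivZ derivC scaler0 add0r /F mulr_suml.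
  apply: eq_bigr => i _; rewrite derivZ deriv_exp /=.
  rewrite -scaler_nat scalerA factS natrM invfM mulrC mulrA mulfV ?mul1r; last first.
    by rewrite pnatr_eq0.
  by rewrite -scalerAl mulrC.
have := congr1 (fun p : {poly rat} => p`_N) hE => /=.
rewrite coef_deriv /E coef_sum.
move=> hc; rewrite (expF_any L N.+1 N.+3 N.+1) //.
rewrite (_ : \sum_(m < N.+3) _ = \sum_(i < N.+3) (i`!%:R^-1 *: P ^+ i)`_N.+1); last first.
  by apply: eq_bigr => m _; rewrite coefZ mulrC.
rewrite hc.
rewrite coefM; apply: eq_bigr => -[k hk] _ /=.
rewrite coef_sum (expF_any L N.+1 N.+2 k); last 2 first.
- lia.
- lia.
congr (_ * _); first by apply: eq_bigr => m _; rewrite coefZ mulrC.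
rewrite coef_deriv coef_poly.
have -> : ((N - k).+1 < N.+2)%N by lia.
by [].
Qed.

Lemma term L n k (e : rat) : (k <= n)%N ->
  ((n.+1)`!%:R ^+ L.+1 : rat) * (e * (((((n - k).+1)`!)%:R ^+ L.+1)^-1 *+ (n - k).+1))
  = 'C(n.+1, k)%:R ^+ L.+1 * (n.+1 - k)%:R * ((k`!)%:R ^+ L.+1 * e).
Proof.
move=> hk.
have h : (n.+1)`! = ('C(n.+1, k) * (k`! * (n - k).+1`!))%N.
  by rewrite -subSn // bin_fact // ltnW.
have hf : ((((n - k).+1)`!)%:R ^+ L.+1 : rat) != 0 by rewrite expf_neq0 // pnatr_eq0 -lt0n fact_gt0.
rewrite h -(mulr_natr ((_ ^+ L.+1)^-1)) subSn //.
move: hf; set F := ((n - k).+1)`!; clearbody F => hf.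
rewrite !natrM !exprMn.
by field.
Qed.

Lemma id1 L n : bL L n.+1 = (n.+1%:R)^-1 * \sum_(k < n.+1)
              ('C(n.+1, k)%:R ^+ L.+1 * (n.+1 - k)%:R * bL L k).
Proof.
have hn : (n.+1%:R : rat) != 0 by rewrite pnatr_eq0.
rewrite /bL -[expF_coef L n.+1](mulfK hn) mulr_natr rec mulrA mulrC.
congr (_ * _); rewrite mulr_sumr; apply: eq_bigr => -[k hk] _ /=.
by rewrite term.
Qed.

Lemma id2 L n : bL L n.+1 =
  \sum_(k < n.+1) ('C(n, k)%:R * 'C(n.+1, k)%:R ^+ L * bL L k).
Proof.
have hn : (n.+1%:R : rat) != 0 by rewrite pnatr_eq0.
rewrite id1 mulr_sumr; apply: eq_bigr => -[k hk] _ /=.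
have hc : (n.+1%:R * 'C(n, k)%:R = (n.+1 - k)%:R * 'C(n.+1, k)%:R :> rat).
  by rewrite -!natrM (mul_bin_down n.+1).
have -> : ('C(n, k)%:R : rat) = n.+1%:R^-1 * ((n.+1 - k)%:R * 'C(n.+1, k)%:R).
  by rewrite -hc mulKf.
move: hn; set a := (n.+1%:R : rat); set c := ('C(n.+1, k)%:R : rat).
set d := ((n.+1 - k)%:R : rat); set b := bL L k.
clearbody a c d b => hn; move: hn => hn.
rewrite exprS; by field.
Qed.

Lemma b0 L : bL L 0 = 1.
Proof. by rewrite /bL /expF_coef big_ord1 expr0 coef1 /= !mul1r expr1n invr1 mul1r. Qed.

Lemma bpos L n : bL L n \is a Num.nat /\ 0 < bL L n.
Proof.
elim/ltn_ind: n => -[|n] IH; first by rewrite b0.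
rewrite id2; split.
  apply: rpred_sum => -[k hk] _ /=.
  have [h _] := IH k hk.
  apply: rpredM h; apply: rpredM; [exact: natr_nat | rewrite -natrX; exact: natr_nat].
rewrite big_ord_recl /= bin0 expr1n !mul1r b0.
apply: ltr_pwDl => //; apply: sumr_ge0 => -[k hk] _ /=.
have [_ /ltW h] := IH k.+1 hk.
by apply: mulr_ge0 => //; apply: mulr_ge0 => //; apply: exprn_ge0.
Qed.

Theorem mainTheorem1 :
  (forall L n : nat,
      bL L n.+1
        = (n.+1%:R)^-1 * \sum_(k < n.+1)
              ('C(n.+1, k)%:R ^+ L.+1 * (n.+1 - k)%:R * bL L k)
   /\ bL L n.+1
        = \sum_(k < n.+1) ('C(n, k)%:R * 'C(n.+1, k)%:R ^+ L * bL L k))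
  /\ (forall L : nat, bL L 0 = 1)
  /\ (forall L n : nat, exists m : nat, (0 < m)%N /\ bL L n = m%:R).
Proof.
split; first by move=> L n; split; [exact: id1 | exact: id2].
split; first exact: b0.
move=> L n; have [/natrP [m hm] hp] := bpos L n.
exists m; split => //; by move: hp; rewrite hm ltr0n.
Qed.
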